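(* Let $k\ge 0$, let $G$ be an oriented graph and $S\subseteq V(G)$. Then $G$ can be derived, as a $k$-Burling graph, from a Burling tree whose top-set (for $G$) is $S$, if and only if there is a set $\mathcal S$ such that $(G,\mathcal S)$ is a $k$-sequential graph with base forest $H=G[S]$.
   Context: Oriented graphs are finite, without loops, multiple arcs or pairs of opposite arcs. In a rooted tree $T$ with root $r$, each non-root vertex $v$ has a parent $p(v)$; children, leaves, ancestors and descendants are as usual. A branch is a sequence $v_1\dots v_k$ ($k\ge0$) with $v_i$ the parent of $v_{i+1}$; it starts at $v_1$. A Burling tree is a 4-tuple $(T,r,\ell,c)$: $T$ a rooted tree with root $r$; $\ell$ assigns to each non-leaf vertex $v$ one of its children $\ell(v)$ (the last-born of $v$); $c$ assigns to every vertex $v$ that is neither the root nor a last-born the vertex-set of a (possibly empty) branch starting at $\ell(p(v))$, and $c(v)=\emptyset$ if $v$ is the root or a last-born. The oriented graph fully derived from it has vertex-set $V(T)$ and an arc $uv$ iff $v\in c(u)$; an oriented graph is derived from the Burling tree if it is an induced subgraph of the fully derived one. $G$ is derived from $T$ as a $k$-Burling graph if it is derived from $T$ and every branch of $T$ contains at most $k$ vertices of $G$. If $G$ is derived from $(T,r,\ell,c)$, the top-set of $G$ is the set of vertices $v$ of $G$ such that $v$ is the only vertex of $G$ on the branch of $T$ from $r$ to $v$. An in-tree is an oriented graph obtained from a rooted tree by orienting every edge towards the root; an in-forest is an oriented forest whose components are in-trees (possibly empty); in an in-forest every vertex that is not a sink has a unique out-neighbor. $k$-sequential graphs are pairs $(G,\mathcal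 S)$, $G$ an oriented graph and $\mathcal S$ a set of stable sets of $G$, defined recursively: the $0$-sequential graph is $(G,\{\emptyset\})$ with $G$ the empty graph. For $k\ge1$, $(G,\mathcal S)$ is $k$-sequential if it is obtained as follows: pick a (possibly empty) in-forest $H$ (the base forest); for every vertex $v$ of $H$ pick a $(k-1)$-sequential graph $(H_v,\mathcal R_v)$, these graphs being vertex-disjoint from each other and from $H$; $G$ consists of $H$, all the $H_v$, and, for every vertex $u$ of $H$ that is not a sink of $H$, with unique out-neighbor $v$ in $H$, all arcs from $u$ to a chosen set $R\in\mathcal R_v$; there are no other vertices or arcs. Finally $\mathcal S=\{\emptyset\}\cup\{\{v\}\cup R: v\in V(H), R\in\mathcal R_v\}$. *)

(* Defs.v *)
From mathcomp Require Import all_boot.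
Set Implicit Arguments. Unset Strict Implicit. Unset Printing Implicit Defensive.

Definition oriented (V : finType) (a : rel V) : Prop :=
  irreflexive a /\ (forall u v, a u v -> ~~ a v u).

Record btree (W : finType) := BTree {
  bt_root : W;
  bt_par  : W -> option W;   (* parent; None exactly for the root *)
  bt_last : W -> W;          (* last-born child (meaningful on non-leaves) *)
  bt_c    : W -> {set W}
}.

Section BT.
Variables (W : finType) (T : btree W).

Definition child (x y : W) : bool := bt_par T y == Some x.

Definition is_branch (s : seq W) : bool :=
  if s is x :: t then path child x t else true.

Definition is_lastborn (v : W) : Prop :=
  exists p, bt_par T v = Some p /\ bt_last T p = v.

Definition is_burling_tree : Prop :=
  [/\ bt_par T (bt_root T) = None,
      (forall w, w <> bt_root T -> bt_par T w <> None) &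
      (exists h : W -> nat, forall w x, bt_par T w = Some x -> h x < h w)] /\
  [/\
      (forall v, (exists w, bt_par T w = Some v) -> bt_par T (bt_last T v) = Some v),
      (forall v, (bt_par T v = None \/ is_lastborn v) -> bt_c T v = set0) &
      (forall v p, bt_par T v = Some p -> bt_last T p <> v ->
         exists s, [/\ is_branch s, (s = [::] \/ ohead s = Some (bt_last T p))
                     & bt_c T v = [set x in s]])].

(* G (on V with arcs a) is derived from T: an induced subgraph of the fully
   derived graph, realised through an injective map phi : V -> W. *)
Definition derived (V : finType) (a : rel V) (phi : V -> W) : Prop :=
  injective phi /\ (forall u v, a u v = (phi v \in bt_c T (phi u))).

Definition k_burling (V : finType) (a : rel V) (phi : V -> W) (k : nat) : Prop :=
  derived a phi /\
  (forall s, is_branch s -> #|[set x in s | x \in codom phi]| <= k).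

Definition in_top (V : finType) (phi : V -> W) (v : V) : Prop :=
  forall t, path child (bt_root T) t -> last (bt_root T) t = phi v ->
    forall u, phi u \in bt_root T :: t -> u = v.

End BT.

(* G[B] is an in-forest: a rooted forest (parent pointers p, acyclic by a rank
   function) with every edge oriented from a vertex to its parent. *)
Definition inforest (V : finType) (a : rel V) (B : {set V}) : Prop :=
  exists (p : V -> option V) (h : V -> nat),
    [/\ (forall u v, u \in B -> v \in B -> (a u v <-> p u = Some v)),
        (forall u v, u \in B -> p u = Some v -> v \in B) &
        (forall u v, u \in B -> p u = Some v -> h v < h u)].

(* [seqb a k X Ss B] : the induced subgraph G[X] of the ambient oriented graph
   (V, a), together with the family Ss of subsets of X, is a k-sequential graph
   whose base forest has vertex set B (for k = 0, B is empty by convention). *)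
Fixpoint seqb (V : finType) (a : rel V) (k : nat) (X : {set V})
    (Ss : {set {set V}}) (B : {set V}) : Prop :=
  match k with
  | 0 => [/\ X = set0, Ss = [set set0] & B = set0]
  | k'.+1 =>
    exists (Xf : V -> {set V}) (Rf : V -> {set {set V}}) (Rsel : V -> {set V}),
    [/\ B \subset X, inforest a B,
       (forall v, v \in B ->
          [/\ Xf v \subset X, [disjoint Xf v & B] &
              exists Bv, seqb a k' (Xf v) (Rf v) Bv]) &
       (forall v w, v \in B -> w \in B -> v <> w -> [disjoint Xf v & Xf w])] /\
    [/\
       (forall x, x \in X -> x \in B \/ exists2 v, v \in B & x \in Xf v),
       [/\ (forall u w, u \in B -> w \in B -> a u w -> Rsel u \in Rf w),
           (forall u w y, u \in B -> w \in B -> y \in Xf w ->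
              (a u y <-> a u w /\ y \in Rsel u)),
           (forall u w y, u \in B -> w \in B -> y \in Xf w -> ~~ a y u) &
           (forall v w x y, v \in B -> w \in B -> v <> w ->
              x \in Xf v -> y \in Xf w -> ~~ a x y)] &
       Ss = set0 |: [set v |: R | v in B, R in Rf v]]
  end.

(* Main.v *)
Require Import Defs.
From mathcomp Require Import all_boot.
From mathcomp Require Import zify.
From Stdlib Require Import IndefiniteDescription.
Set Implicit Arguments. Unset Strict Implicit. Unset Printing Implicit Defensive.

Section Tree.
Variables (W : finType) (T : btree W) (hh : W -> nat).
Hypothesis Hh : forall w x, bt_par T w = Some x -> hh x < hh w.
Notation par := (bt_par T).
Notation ch := (child T).

Lemma child_par x y : ch x y = (par y == Some x). Proof. by []. Qed.

Lemma conn_h x y : connect ch x y -> hh x <= hh y.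
Proof.
move=> /connectP[p]; elim: p x => [|z p IH] x /=; first by move=> _ ->.
move=> /andP[/eqP/Hh hz /IH H] /H; apply: leq_trans; exact: ltnW.
Qed.

Lemma conn_par z y p : connect ch z y -> z != y -> par y = Some p -> connect ch z p.
Proof.
move=> /connectP[q]; elim/last_ind: q => [|q x _] /=; first by move=> _ -> /eqP.
rewrite rcons_path last_rcons => /andP[Hq /eqP Hx] -> _; rewrite Hx => -[<-].
by apply/connectP; exists q.
Qed.

Lemma conn_hlt x y : connect ch x y -> x != y -> hh x < hh y.
Proof.
move=> /connectP[[|z p]] /=; first by move=> _ ->; rewrite eqxx.
move=> /andP[/eqP/Hh hz Hp] -> _; apply: leq_trans hz _.
by apply: conn_h; apply/connectP; exists p.
Qed.

Lemma conn_antisym x y : connect ch x y -> connect ch y x -> x = y.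
Proof.
move=> H1 H2; apply/eqP; apply/negPn/negP => ne.
have := conn_hlt H1 ne; have := conn_h H2; lia.
Qed.

Lemma conn_child x y : par y = Some x -> connect ch x y.
Proof. by move=> H; apply: connect1; rewrite /child H. Qed.

Lemma conn_first x y : connect ch x y -> x != y -> exists b, par b = Some x /\ connect ch b y.
Proof.
move=> /connectP[[|b p]] /=; first by move=> _ ->; rewrite eqxx.
move=> /andP[/eqP hb Hp] -> _; exists b; split=> //; by apply/connectP; exists p.
Qed.

Lemma path_conn_start b t x : path ch b t -> x \in b :: t -> connect ch b x.
Proof. by move=> Hp Hx; apply: (path_connect Hp). Qed.

Lemma path_conn_last b t x : path ch b t -> x \in b :: t -> connect ch x (last b t).
Proof.
elim: t b x => [|c t IH] b x /=; first by move=> _; rewrite inE => /eqP ->; exact: connect0.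
move=> /andP[hc Hp]; rewrite inE => /orP[/eqP->|Hx]; last exact: IH.
exact: connect_trans (connect1 hc) (IH _ _ Hp (mem_head _ _)).
Qed.

Lemma path_anc b t x z : path ch b t -> x \in b :: t -> connect ch z x ->
  z \in b :: t \/ connect ch z b.
Proof.
elim: t b => [|c t IH] b /=.
  by move=> _; rewrite inE => /eqP -> ; right.
move=> /andP[hc Hp]; rewrite inE => /orP[/eqP->|Hx] Hz; first by right.
case: (IH c Hp Hx Hz) => [H|H]; first by left; rewrite inE H orbT.
case: (eqVneq z c) => [->|ne]; first by left; rewrite !inE eqxx orbT.
by right; apply: conn_par H ne _; apply/eqP.
Qed.

Lemma conn_comp x y z : connect ch x z -> connect ch y z -> connect ch x y \/ connect ch y x.
Proof.
move=> Hx /connectP[p Hp Ez]; rewrite Ez in Hx.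
case: (path_anc Hp (mem_last y p) Hx) => [H|H]; last by left.
by right; exact: path_conn_start Hp H.
Qed.

Lemma path_split b t x : path ch b t -> x \in b :: t ->
  exists t1 t2, [/\ b :: t = t1 ++ x :: t2, path ch x t2 & forall z, z \in t1 -> connect ch z x].
Proof.
elim: t b => [|c t IH] b /=.
  move=> _; rewrite inE => /eqP ->; by exists [::], [::].
move=> /andP[hc Hp]; rewrite inE => /orP[/eqP->|Hx].
  by exists [::], (c :: t); rewrite /= hc Hp.
have [t1 [t2 [E P2 A]]] := IH c Hp Hx.
exists (b :: t1), t2; split=> //; first by rewrite E.
move=> z; rewrite inE => /orP[/eqP->|Hz]; last exact: A.
have Hc : connect ch c x by apply: path_conn_start (Hp) _; rewrite E mem_cat inE eqxx orbT.
exact: connect_trans (connect1 hc) Hc.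
Qed.

Lemma reach_root w : par (bt_root T) = None ->
  (forall w, w <> bt_root T -> par w <> None) -> connect ch (bt_root T) w.
Proof.
move=> Hr Hn; elim: {w}(hh w).+1 {-2}w (ltnSn (hh w)) => // n IH w hw.
case: (eqVneq w (bt_root T)) => [->|ne]; first exact: connect0.
case E: (par w) => [p|]; last by case: (Hn w (elimN eqP ne)).
apply: connect_trans (IH p _) (conn_child E).
have := Hh E; lia.
Qed.

Definition depth x := #|[set z | connect ch z x]|.

Lemma depth_par x q : par x = Some q -> depth x = (depth q).+1.
Proof.
move=> E; rewrite /depth.
have -> : [set z | connect ch z x] = x |: [set z | connect ch z q].
  apply/setP=> z; rewrite !inE; case: (eqVneq z x) => [->|ne] /=; first exact: connect0.
  apply/idP/idP => H; first exact: conn_par H ne E.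
  exact: connect_trans H (conn_child E).
rewrite cardsU1 inE; case: (boolP (connect ch x q)) => // H.
have := conn_h H; have := Hh E; lia.
Qed.

Lemma depth_lt x y : connect ch x y -> x != y -> depth x < depth y.
Proof.
move=> H ne; apply: proper_card; apply/properP; split.
  apply/subsetP=> z; rewrite !inE => Hz; exact: connect_trans Hz H.
exists y; rewrite !inE ?connect0 //; apply/negP => H2.
by move/eqP: ne; apply; apply: conn_antisym.
Qed.

Lemma depth_le x : depth x <= #|W|.
Proof. exact: max_card. Qed.

End Tree.

Lemma seqb_set0 (V : finType) (a : rel V) k X Ss B : seqb a k X Ss B -> set0 \in Ss.
Proof.
case: k => [[_ -> _]|k]; first by rewrite inE.
by move=> [Xf [Rf [Rs [_ [_ _ ->]]]]]; rewrite !inE eqxx.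
Qed.

Lemma disjP (T : finType) (A B : {set T}) : (forall x, x \in A -> x \in B -> False) -> [disjoint A & B].
Proof. move=> H; rewrite disjoint_subset; apply/subsetP => x Hx; rewrite inE; apply/negP => /(H x Hx). by []. Qed.

Lemma nlt_le m n : m < n -> n <= m -> False.
Proof. by move=> H; rewrite leqNgt H. Qed.

Section TS.
Variables (V W : finType) (a : rel V) (T : btree W) (phi : V -> W) (hh : W -> nat).
Notation par := (bt_par T).
Notation ch := (child T).
Notation root := (bt_root T).
Notation lst := (bt_last T).
Hypothesis Hh : forall w x, par w = Some x -> hh x < hh w.
Hypothesis Hroot : par root = None.
Hypothesis Hnon : forall w, w <> root -> par w <> None.
Hypothesis Hlast : forall v, (exists w, par w = Some v) -> par (lst v) = Some v.
Hypothesis Hc0 : forall v, (par v = None \/ is_lastborn T v) -> bt_c T v = set0.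
Hypothesis Hc : forall v p, par v = Some p -> lst p <> v ->
         exists s, [/\ is_branch T s, (s = [::] \/ ohead s = Some (lst p))
                     & bt_c T v = [set x in s]].
Hypothesis Hinj : injective phi.
Hypothesis Harc : forall u v, a u v = (phi v \in bt_c T (phi u)).

Lemma ARC u v : a u v -> exists p0 t0,
  [/\ par (phi u) = Some p0, par (lst p0) = Some p0, path ch (lst p0) t0,
      phi v \in lst p0 :: t0 & (bt_c T (phi u) = [set x in lst p0 :: t0] /\ lst p0 != phi u)].
Proof.
rewrite Harc => H.
case E: (par (phi u)) => [p0|]; last first.
  have E0 : bt_c T (phi u) = set0 by apply: Hc0; left.
  by rewrite E0 inE in H.
case: (eqVneq (lst p0) (phi u)) => [e|ne].
  have E0 : bt_c T (phi u) = set0 by apply: Hc0; right; exists p0.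
  by rewrite E0 inE in H.
have [s [Bs Hs Ec]] := Hc E (elimN eqP ne).
case: Hs => [Es|Es]; first by rewrite Ec Es inE in H.
case: s Bs Es Ec => [|x t0] //= Bs [Ex] Ec; subst x.
exists p0, t0; split=> //; first by apply: Hlast; exists (phi u).
by rewrite Ec inE in H.
Qed.

Definition st (r : option W) b := if r is Some r0 then par b == Some r0 else b == root.
Definition reg r y := [exists b, st r b && connect ch b y].
Definition Xr r := [set x | reg r (phi x)].
Definition top r := [set x in Xr r | [forall y in Xr r, connect ch (phi y) (phi x) ==> (y == x)]].
Definition Gs (s : seq W) := [set y | phi y \in s].
Definition cnt (s : seq W) := #|[set x in s | x \in codom phi]|.

Lemma regP r y : reflect (exists2 b, st r b & connect ch b y) (reg r y).
Proof.
apply: (iffP existsP) => [[b /andP[]]|[b H1 H2]]; first by exists b.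
by exists b; rewrite H1.
Qed.

Lemma no_self_child b : par b = Some b -> False.
Proof. by move/Hh; rewrite ltnn. Qed.

Lemma st_anti r b b' : st r b -> st r b' -> connect ch b' b -> b' = b.
Proof.
case: r => [r0|] /= => [/eqP Hb /eqP Hb' C|/eqP -> /eqP -> //].
case: (eqVneq b' b) => // ne.
have C2 := conn_par C ne Hb.
have := conn_h Hh C2; have := Hh Hb'; lia.
Qed.

Lemma reg_desc r x y : reg r x -> connect ch x y -> reg r y.
Proof. move=> /regP[b Hb C] C2; apply/regP; exists b => //; exact: connect_trans C C2. Qed.

Lemma reg_sib r u p0 L : reg r u -> par u = Some p0 -> par L = Some p0 -> reg r L.
Proof.
move=> /regP[b Hb C] Eu EL; apply/regP.
case: (eqVneq b u) => [ebu|ne].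
  case: r Hb => [r0|] /= /eqP Hb.
    by exists L => //=; rewrite EL -Eu -ebu Hb.
  by rewrite -ebu Hb Hroot in Eu.
exists b => //; exact: connect_trans (conn_par C ne Eu) (conn_child EL).
Qed.

Lemma reg_Some p y : reg (Some p) y = connect ch p y && (p != y).
Proof.
apply/idP/idP.
  move=> /regP[b /= /eqP Hb C]; rewrite (connect_trans (conn_child Hb) C) /=.
  apply/eqP => e; rewrite -e in C.
  have := conn_h Hh C; have := Hh Hb; lia.
move=> /andP[C ne]; have [b [Hb Cb]] := conn_first C ne.
by apply/regP; exists b => //=; rewrite Hb.
Qed.

Lemma path_notin b t x : par b = Some x -> path ch b t -> x \notin b :: t.
Proof.
move=> Hb Hp; apply/negP => /(path_conn_start Hp) C.
have := conn_h Hh C; have := Hh Hb; lia.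
Qed.


Lemma XrE r x : (x \in Xr r) = reg r (phi x).
Proof. by rewrite inE. Qed.

Lemma topP r x : x \in top r -> x \in Xr r /\ (forall y, y \in Xr r -> connect ch (phi y) (phi x) -> y = x).
Proof.
rewrite inE => /andP[Hx /forallP H]; split=> // y Hy C.
by have := H y; rewrite Hy C /= => /eqP.
Qed.

Lemma top_intro r x : x \in Xr r -> (forall y, y \in Xr r -> connect ch (phi y) (phi x) -> y = x) -> x \in top r.
Proof.
move=> Hx H; rewrite inE Hx /=; apply/forallP => y; apply/implyP => Hy; apply/implyP => C.
by rewrite (H y Hy C).
Qed.

Lemma arc_reg r u y : u \in Xr r -> a u y -> y \in Xr r.
Proof.
move=> Hu /ARC [p0 [t0 [E1 E2 Hp Hy _]]].
rewrite XrE; apply: reg_desc (path_conn_start Hp Hy).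
by apply: reg_sib E1 E2; rewrite -XrE.
Qed.

Lemma XfE p y : (y \in Xr (Some p)) = connect ch p (phi y) && (p != phi y).
Proof. by rewrite XrE reg_Some. Qed.

Lemma Xf_B r v y : v \in top r -> y \in Xr (Some (phi v)) -> y \notin top r.
Proof.
move=> /topP[Hv _] Hy; apply/negP => /topP[_ H].
move: Hy; rewrite XfE => /andP[C ne].
by move: (H v Hv C) ne => ->; rewrite eqxx.
Qed.

Lemma Xf_sub r v y : v \in Xr r -> y \in Xr (Some (phi v)) -> y \in Xr r.
Proof.
rewrite XfE => Hv /andP[C _]; rewrite XrE; apply: reg_desc C; by rewrite -XrE.
Qed.

Lemma cnt_pos s x : phi x \in s -> 0 < cnt s.
Proof.
move=> H; rewrite /cnt card_gt0; apply/set0Pn; exists (phi x).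
by rewrite inE H codom_f.
Qed.

Lemma Gs_cat s1 s2 : Gs (s1 ++ s2) = Gs s1 :|: Gs s2.
Proof. by apply/setP => y; rewrite !inE mem_cat. Qed.

Lemma Gs_nil : Gs [::] = set0.
Proof. by apply/setP => y; rewrite !inE. Qed.

Lemma sub_bound v b t r : v \in Xr r -> st (Some (phi v)) b -> path ch b t ->
  exists b0 t0, [/\ st r b0, path ch b0 t0 & cnt (b :: t) < cnt (b0 :: t0)].
Proof.
rewrite XrE => /regP[b0 Hb0 /connectP[p0 Hp0 E0]] /= /eqP Hb Hp.
exists b0, (p0 ++ b :: t); split=> //.
  rewrite cat_path Hp0 -E0 /= Hp andbT; by rewrite /child Hb.
apply: proper_card; apply/properP; split.
  apply/subsetP => x; rewrite !inE => /andP[H1 ->]; rewrite andbT.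
  by rewrite mem_cat in_cons H1 !orbT.
exists (phi v).
  have Hv : phi v \in b0 :: p0 by rewrite E0 mem_last.
  by rewrite in_set codom_f andbT -cat_cons mem_cat Hv.
rewrite inE codom_f andbT; exact: path_notin Hb Hp.
Qed.

Lemma tree_seq k : forall r, (forall b t, st r b -> path ch b t -> cnt (b :: t) <= k) ->
  exists Ss, seqb a k (Xr r) Ss (top r) /\ (forall b t, st r b -> path ch b t -> Gs (b :: t) \in Ss).
Proof.
elim: k => [|k IH] r Hb.
  have X0 : Xr r = set0.
    apply/setP => x; rewrite XrE inE; apply/negbTE/negP => /regP[b Hb0 /connectP[t Ht E]].
    have := cnt_pos (x := x) (s := b :: t); rewrite E mem_last => /(_ isT) H.
    exact: nlt_le H (Hb b t Hb0 Ht).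
  exists [set set0]; split.
    split=> //; apply/setP => x; rewrite in_set0; apply/negbTE/negP => /topP[]; by rewrite X0 inE.
  move=> b t Hb0 Ht; rewrite inE; apply/eqP/setP => y; rewrite in_set0 in_set.
  apply/negbTE/negP => /cnt_pos H; exact: nlt_le H (Hb b t Hb0 Ht).

have Hch : forall v, exists R : {set {set V}}, v \in Xr r ->
   seqb a k (Xr (Some (phi v))) R (top (Some (phi v))) /\
   (forall b t, st (Some (phi v)) b -> path ch b t -> Gs (b :: t) \in R).
  move=> v; case: (boolP (v \in Xr r)) => Hv; last by exists set0.
  have [R HR] : exists R, seqb a k (Xr (Some (phi v))) R (top (Some (phi v))) /\
   (forall b t, st (Some (phi v)) b -> path ch b t -> Gs (b :: t) \in R).
    apply: IH => b t Hb' Ht.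
    have [b0 [t0 [H1 H2 H3]]] := sub_bound Hv Hb' Ht.
    by rewrite -ltnS (leq_trans H3 (Hb b0 t0 H1 H2)).
  by exists R.
have [Rf HRf] := @functional_choice _ _ _ Hch.
set B := top r.
pose pf u := [pick w in B | a u w].
pose Rs u := [set y | a u y] :\: B.
have RsE : forall u y, (y \in Rs u) = a u y && (y \notin B).
  by move=> u y; rewrite /Rs in_setD andbC; congr (_ && _); rewrite inE.
pose hq u := 2 * (#|W| - depth T (phi u)) + (if pf u is Some _ then 1 else 0).
have U : forall u w1 w2, w1 \in B -> w2 \in B -> a u w1 -> a u w2 -> w1 = w2.
  move=> u w1 w2 H1 H2 A1 A2.
  have [p0 [t0 [E1 E2 Hp Hw1 [Ec _]]]] := ARC A1.
  have Hw2 : phi w2 \in lst p0 :: t0 by move: A2; rewrite Harc Ec inE.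
  have C1 := path_conn_last Hp Hw1; have C2 := path_conn_last Hp Hw2.
  have [X1 T1] := topP H1; have [X2 T2] := topP H2.
  case: (conn_comp C1 C2) => C; [exact: T2 w1 X1 C | symmetry; exact: T1 w2 X2 C].
have Lsink : forall u v p0, par (phi u) = Some p0 -> phi v = lst p0 -> forall z, ~~ a v z.
  move=> u v p0 E1 e z; apply/negP => /ARC [p1 [t1 [F1 _ _ _ [_ ne]]]].
  have : par (phi v) = Some p0 by rewrite e; apply: Hlast; exists (phi u).
  rewrite F1 => -[ep]; subst p1; by rewrite e eqxx in ne.
exists (set0 |: [set v |: R | v in B, R in Rf v]); split; last first.
  move=> b t Hb0 Ht.
  case: (boolP [exists y, phi y \in b :: t]) => [/existsP [y0 Py0]|/existsPn H0]; last first.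
    rewrite (_ : Gs _ = set0) ?setU11 //; apply/setP => y.
    by rewrite in_set0 in_set (negbTE (H0 y)).
  case: (@arg_minnP _ _ (fun y => phi y \in b :: t) (fun y => hh (phi y)) Py0) => v Pv Hmin.
  have Xv : v \in Xr r by rewrite XrE; apply/regP; exists b => //; exact: path_conn_start Ht Pv.
  have Bv : v \in B.
    apply: top_intro Xv _ => z Hz Cz.
    have Pz : phi z \in b :: t.
      case: (path_anc Ht Pv Cz) => // Czb.
      move: Hz; rewrite XrE => /regP[b' Hb' Cb'].
      have eb := st_anti Hb0 Hb' (connect_trans Cb' Czb); subst b'.
      by rewrite (conn_antisym Hh Czb Cb') mem_head.
    case: (eqVneq z v) => // nzv.
    have nz : phi z != phi v by rewrite (inj_eq Hinj).
    by case: (nlt_le (conn_hlt Hh Cz nz) (Hmin z Pz)).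
  have [t1 [t2 [Es Hp2 Anc]]] := path_split Ht Pv.
  have EG : Gs (b :: t) = v |: Gs t2.
    apply/setP => y; rewrite in_setU1 !in_set Es mem_cat in_cons (inj_eq Hinj).
    case: (eqVneq y v) => [->|nyv] /=; first by rewrite orbT.
    case: (boolP (phi y \in t1)) => H //=.
    have Py : phi y \in b :: t by rewrite Es mem_cat H.
    have ny : phi y != phi v by rewrite (inj_eq Hinj).
    by case: (nlt_le (conn_hlt Hh (Anc _ H) ny) (Hmin y Py)).
  rewrite EG; apply/setU1P; right; apply: imset2_f => //.
  case: t2 Hp2 {Es Anc EG} => [|b2 t2'] Hp2; first by rewrite Gs_nil; exact: seqb_set0 (HRf v Xv).1.
  move: Hp2 => /= /andP[Hb2 Hp2]; exact: (HRf v Xv).2.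
exists (fun v => Xr (Some (phi v))), Rf, Rs.
split; first split.
- by apply/subsetP => x /topP[].
- exists pf, hq; split.
  + move=> u v Hu Hv; rewrite /pf; case: pickP => [w /andP[Hw Aw]|H0]; split.
    * by move=> A; congr Some; exact: U u w v Hw Hv Aw A.
    * by move=> [<-].
    * by move=> A; move: (H0 v); rewrite Hv A.
    * by [].
  + by move=> u v _; rewrite /pf; case: pickP => [w /andP[Hw _] [<-]|].
  + move=> u v Hu E.
    have A : a u v by move: E; rewrite /pf; case: pickP => [w /andP[_ Aw] [<-]|].
    have [p0 [t0 [E1 E2 Hp Hv' [Ec ne]]]] := ARC A.
    have D1 : depth T (lst p0) = depth T (phi u) by rewrite (depth_par Hh E2) (depth_par Hh E1).
    rewrite /hq E; case: (eqVneq (phi v) (lst p0)) => e.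
      have -> : pf v = None.
        rewrite /pf; case: pickP => // w /andP[_ Aw].
        by have := Lsink u v p0 E1 e w; rewrite Aw.
      by rewrite e D1 addn0 addn1.
    have ne' : lst p0 != phi v by rewrite eq_sym.
    have Dl := depth_lt Hh (path_conn_start Hp Hv') ne'.
    have Hle := depth_le T (phi v); case: (pf v) => [?|]; clear -Dl Hle D1; lia.
- move=> v Hv; have [Xv _] := topP Hv; split.
  + by apply/subsetP => y; exact: Xf_sub Xv.
  + apply: disjP => y H1 H2; have := Xf_B Hv H1; by rewrite H2.
  + exists (top (Some (phi v))); exact: (HRf v Xv).1.
- move=> v w Hv Hw nvw; apply: disjP => y; rewrite !XfE => /andP[C1 _] /andP[C2 _].
  have [Xv Tv] := topP Hv; have [Xw Tw] := topP Hw.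
  case: (conn_comp C1 C2) => C; [exact: nvw (Tw v Xv C) | exact: nvw (esym (Tv w Xw C))].
split.
- move=> x Hx; case: (boolP (x \in B)) => HB; [by left | right].
  have [y0 Py0] : exists y, [&& y \in Xr r, connect ch (phi y) (phi x) & y != x].
    move: HB; rewrite inE Hx /= => /forallPn [y]; rewrite negb_imply => /andP[Hy].
    rewrite negb_imply => /andP[C ne]; exists y; by rewrite Hy C ne.
  case: (@arg_minnP _ _ (fun y => [&& y \in Xr r, connect ch (phi y) (phi x) & y != x]) (fun y => hh (phi y)) Py0) => v /and3P[Hv Cv nev] Hmin.
  exists v.
    apply: top_intro Hv _ => z Hz Cz.
    case: (eqVneq z v) => // nzv; exfalso.
    have Czx := connect_trans Cz Cv.
    have nzx : z != x.
      apply/eqP => ezx; subst z.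
      by move: nev; rewrite (Hinj (conn_antisym Hh Cz Cv)) eqxx.
    have Pz : [&& z \in Xr r, connect ch (phi z) (phi x) & z != x] by rewrite Hz Czx nzx.
    have nz : phi z != phi v by rewrite (inj_eq Hinj).
    exact: nlt_le (conn_hlt Hh Cz nz) (Hmin z Pz).
  by rewrite XfE Cv (inj_eq Hinj) nev.
split.
- move=> u w Hu Hw A.
  have [p0 [t0 [E1 E2 Hp Hw' [Ec ne]]]] := ARC A.
  have [t1 [t2 [Es Hp2 Anc]]] := path_split Hp Hw'.
  have [Xu _] := topP Hu; have [Xw Tw] := topP Hw.
  have RL : reg r (lst p0) by apply: reg_sib E1 E2; rewrite -XrE.
  have -> : Rs u = Gs t2.
    apply/setP => y; rewrite RsE [y \in Gs _]inE; apply/idP/idP.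
      move=> /andP[Ay nB].
      have : phi y \in t1 ++ phi w :: t2 by rewrite -Es; move: Ay; rewrite Harc Ec inE.
      rewrite mem_cat in_cons => /or3P[H|/eqP e|//].
        have Xy : y \in Xr r.
          rewrite XrE; apply: reg_desc RL (path_conn_start Hp _); by rewrite Es mem_cat H.
        by move: nB; rewrite (Tw y Xy (Anc _ H)) Hw.
      by move: nB; rewrite (Hinj e) Hw.
    move=> Ht2; case: t2 Hp2 Ht2 Es {Anc} => [|b2 t2'] //= /andP[Hb2 Hp2] Ht2 Es.
    rewrite Harc Ec in_set Es mem_cat in_cons Ht2 !orbT andTb.
    apply: Xf_B Hw _; rewrite XfE.
    rewrite (connect_trans (connect1 Hb2) (path_conn_start Hp2 Ht2)) /=.
    apply/eqP => e; have := path_notin (elimT eqP Hb2) Hp2; by rewrite e Ht2.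
  case: t2 Hp2 {Es Anc} => [|b2 t2'] Hp2; first by rewrite Gs_nil; exact: seqb_set0 (HRf w Xw).1.
  move: Hp2 => /= /andP[Hb2 Hp2]; exact: (HRf w Xw).2.
- move=> u w y Hu Hw Hy; split; last by case=> _; rewrite /Rs in_setD in_set => /andP[].
  move=> A; split; last by rewrite /Rs in_setD in_set A andbT; exact: Xf_B Hw Hy.
  have [p0 [t0 [E1 E2 Hp Hy' [Ec ne]]]] := ARC A.
  move: Hy; rewrite XfE => /andP[Cwy nwy].
  case: (eqVneq (phi w) (lst p0)) => [e|ne2]; first by rewrite Harc Ec inE e mem_head.
  case: (path_anc Hp Hy' Cwy) => [H|H]; first by rewrite Harc Ec inE.
  exfalso; have Cwp := conn_par H ne2 E2.
  have [Xw _] := topP Hw; have [_ Tu] := topP Hu.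
  have e := Tu w Xw (connect_trans Cwp (conn_child E1)); subst w.
  exact: nlt_le (Hh E1) (conn_h Hh Cwp).
- move=> u w y Hu Hw Hy; apply/negP => A.
  have [p0 [t0 [E1 E2 Hp Hu' _]]] := ARC A.
  move: Hy; rewrite XfE => /andP[Cwy nwy].
  have Cwp := conn_par Cwy nwy E1.
  have CwL := connect_trans Cwp (conn_child E2).
  have CLu := path_conn_start Hp Hu'.
  have [Xw _] := topP Hw; have [_ Tu] := topP Hu.
  have e := Tu w Xw (connect_trans CwL CLu); subst w.
  exact: nlt_le (Hh E2) (conn_h Hh (connect_trans CLu Cwp)).
- move=> v w x y Hv Hw nvw Hx Hy; apply/negP => A.
  have [p0 [t0 [E1 E2 Hp Hy' _]]] := ARC A.
  move: Hx; rewrite XfE => /andP[Cvx nvx].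
  move: Hy; rewrite XfE => /andP[Cwy _].
  have Cvy := connect_trans (connect_trans (conn_par Cvx nvx E1) (conn_child E2)) (path_conn_start Hp Hy').
  have [Xv Tv] := topP Hv; have [Xw Tw] := topP Hw.
  case: (conn_comp Cvy Cwy) => C; [exact: nvw (Tw v Xv C) | exact: nvw (esym (Tv w Xw C))].
- by [].
Qed.

End TS.

Lemma dir1 (k : nat) (V : finType) (a : rel V) (S : {set V}) :
  (exists (W : finType) (T : btree W) (phi : V -> W),
      [/\ is_burling_tree T, k_burling T a phi k &
          forall v, v \in S <-> in_top T phi v]) ->
  exists Ss : {set {set V}}, seqb a k [set: V] Ss S.
Proof.
move=> [W [T [phi [[[Hroot Hnon [h Hh]] [Hlast Hc0 Hc]] [[Hinj Harc] Hbound] HS]]]].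
have Hb : forall b t, st T None b -> path (child T) b t -> cnt phi (b :: t) <= k.
  move=> b t /= /eqP -> Ht; exact: (Hbound (bt_root T :: t) Ht).
have [Ss [HSs _]] := @tree_seq V W a T phi h Hh Hroot Hlast Hc0 Hc Hinj Harc k None Hb.
have Hreach := fun w => reach_root Hh w Hroot Hnon.
have EX : Xr T phi None = [set: V].
  apply/setP => x; rewrite XrE inE; apply/regP; exists (bt_root T) => //=.
have ET : top T phi None = S.
  apply/setP => x; apply/idP/idP.
    move=> /topP[_ Ht]; apply/HS => t Hp El u Hu.
    apply: Ht; first by rewrite XrE; apply/regP; exists (bt_root T) => //=.
    by rewrite -El; exact: path_conn_last Hp Hu.
  move=> /HS Ht; apply: top_intro; first by rewrite EX inE.
  move=> y _ C; have /connectP[t Hp El] := Hreach (phi x).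
  apply: (Ht t Hp (esym El)).
  rewrite El in C; case: (path_anc Hp (mem_last _ _) C) => // C2.
  by rewrite (conn_antisym Hh C2 (Hreach _)) mem_head.
by exists Ss; rewrite -EX -ET.
Qed.

Record dat (V : finType) := Dat { d_own : option V; d_rk : nat; d_lvl : nat; d_fp : option V;
  d_rs : {set V}; d_sub : {set V}; d_fam : {set {set V}} }.

Fixpoint wf (V : finType) (a : rel V) (D : V -> dat V) (k : nat) (X : {set V})
   (c : option V) (Ss : {set {set V}}) : Prop :=
  match k with
  | 0 => X = set0 /\ Ss = [set set0]
  | k'.+1 =>
    let B := [set x in X | d_own (D x) == c] in
    [/\ (forall u, u \in B -> [/\ d_rk (D u) < #|V|, d_lvl (D u) = k',
           (forall w, d_fp (D u) = Some w -> w \in B /\ d_rk (D w) < d_rk (D u)) &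
           (forall w, w \in B -> a u w = (d_fp (D u) == Some w))]),
        (forall v, v \in B -> [/\ d_sub (D v) \subset X, [disjoint d_sub (D v) & B] &
              wf a D k' (d_sub (D v)) (Some v) (d_fam (D v))]),
        (forall v w, v \in B -> w \in B -> v <> w -> [disjoint d_sub (D v) & d_sub (D w)]),
        (forall x, x \in X -> x \in B \/ exists2 v, v \in B & x \in d_sub (D v)) &
        [/\ (forall u w, u \in B -> w \in B -> a u w -> d_rs (D u) \in d_fam (D w)),
           (forall u w y, u \in B -> w \in B -> y \in d_sub (D w) ->
              (a u y <-> a u w /\ y \in d_rs (D u))),
           (forall u w y, u \in B -> w \in B -> y \in d_sub (D w) -> ~~ a y u),
           (forall v w x y, v \in B -> w \in B -> v <> w ->
              x \in d_sub (D v) -> y \in d_sub (D w) -> ~~ a x y) &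
           Ss = set0 |: [set v |: R | v in B, R in d_fam (D v)]]]
  end.

Section WF.
Variables (V : finType) (a : rel V).

Lemma wf_ext k : forall (X : {set V}) (c : option V) (Ss : {set {set V}}) (D D' : V -> dat V), (forall x, x \in X -> D' x = D x) ->
  wf a D k X c Ss -> wf a D' k X c Ss.
Proof.
elim: k => [|k IH] X c Ss D D' E //=.
set B := [set x in X | _]; set B' := [set x in X | _].
have EB : B' = B by apply/setP => x; rewrite !inE; case: (boolP (x \in X)) => //= Hx; rewrite E.
have BX : forall x, x \in B -> x \in X by move=> x; rewrite inE => /andP[].
rewrite EB => -[H1 H2 H3 H4 [H5 H6 H7 H8 H9]].
have EB' : forall x, x \in B -> D' x = D x by move=> x /BX; exact: E.
split.
- move=> u Hu; rewrite EB' //; have [h1 h2 h3 h4] := H1 u Hu; split=> //.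
    by move=> w /h3 [Hw ?]; rewrite EB'.
- move=> v Hv; rewrite EB' //; have [h1 h2 h3] := H2 v Hv; split=> //.
  apply: IH h3 => x Hx; apply: E; exact: (subsetP h1).
- by move=> v w Hv Hw; rewrite !EB' //; exact: H3.
- by move=> x Hx; case: (H4 x Hx) => [|[v Hv Hx']]; [left | right; exists v; rewrite ?EB'].
split.
- by move=> u w Hu Hw; rewrite !EB' //; exact: H5.
- by move=> u w y Hu Hw; rewrite !EB' //; exact: H6.
- by move=> u w y Hu Hw; rewrite !EB' //; exact: H7.
- by move=> v w x y Hv Hw; rewrite !EB' //; exact: H8.
- rewrite H9; congr (_ |: _); apply/setP => S.
  apply/imset2P/imset2P => -[v R Hv HR ->]; exists v R => //; move: HR; by rewrite EB'.
Qed.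


Definition dat0 : dat V := Dat None 0 0 None set0 set0 set0.

Lemma ext k : forall X Ss B c, seqb a k X Ss B ->
  (c = None \/ exists2 w, c = Some w & w \notin X) ->
  exists D : V -> dat V, [/\ wf a D k X c Ss, B = [set x in X | d_own (D x) == c] &
   forall x, x \in X -> d_own (D x) = c \/ exists2 y, d_own (D x) = Some y & y \in X].
Proof.
elim: k => [|k IH] X Ss B c.
  move=> [-> -> ->] _; exists (fun _ => dat0); split=> //.
    by apply/setP => x; rewrite !inE.
  by move=> x; rewrite inE.
move=> [Xf [Rf [Rs [[HBX [p [h [Hp1 Hp2 Hp3]]] Hsub Hdisj] [Hcov [A1 A2 A3 A4] HSs]]]]] Hc.
have Hch : forall v, exists Dv : V -> dat V, v \in B ->
    wf a Dv k (Xf v) (Some v) (Rf v) /\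
    (forall x, x \in Xf v -> d_own (Dv x) = Some v \/ exists2 y, d_own (Dv x) = Some y & y \in Xf v).
  move=> v; case: (boolP (v \in B)) => Hv; last by exists (fun _ => dat0).
  have [Xs Xd [Bv HBv]] := Hsub v Hv.
  have nv : v \notin Xf v by rewrite (disjointFl Xd Hv).
  have [Dv [W1 _ W3]] := IH _ _ _ (Some v) HBv (or_intror (ex_intro2 _ _ v erefl nv)).
  by exists Dv.
have [Dv HDv] := @functional_choice _ _ _ Hch.
pose sig x := odflt x [pick v in B | x \in Xf v].
pose rk x := #|[set y in B | h y < h x]|.
pose D x := if x \in B then Dat c (rk x) k (p x) (Rs x) (Xf x) (Rf x) else Dv (sig x) x.
have DB : forall u, u \in B -> D u = Dat c (rk u) k (p u) (Rs u) (Xf u) (Rf u).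
  by move=> u Hu; rewrite /D Hu.
have XfnB : forall v x, v \in B -> x \in Xf v -> x \notin B.
  move=> v x Hv Hx; have [_ Xd _] := Hsub v Hv; by rewrite (disjointFr Xd Hx).
have DX : forall v x, v \in B -> x \in Xf v -> D x = Dv v x.
  move=> v x Hv Hx; rewrite /D (negbTE (XfnB v x Hv Hx)) /sig.
  case: pickP => [v' /andP[Hv' Hx']|H0] /=; last by move: (H0 v); rewrite Hv Hx.
  case: (eqVneq v' v) => [->|ne] //.
  by move: (disjointFr (Hdisj v' v Hv' Hv (elimN eqP ne)) Hx'); rewrite Hx.
have Hinv : forall x, x \in X -> x \notin B ->
    exists2 y, d_own (D x) = Some y & y \in X.
  move=> x Hx nB; case: (Hcov x Hx) => [H|[v Hv Hxv]]; first by rewrite H in nB.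
  have [Xs _ _] := Hsub v Hv.
  rewrite (DX v x Hv Hxv); case: ((HDv v Hv).2 x Hxv) => [->|[y -> Hy]].
    by exists v => //; exact: (subsetP HBX).
  by exists y => //; exact: (subsetP Xs).
have EB : [set x in X | d_own (D x) == c] = B.
  apply/setP => x; rewrite inE; case: (boolP (x \in X)) => Hx /=; last first.
    by apply/esym/negbTE/negP => /(subsetP HBX); rewrite (negbTE Hx).
  case: (boolP (x \in B)) => HxB; first by rewrite DB //= eqxx.
  have [y -> Hy] := Hinv x Hx HxB; case: Hc => [->|[w -> Hw]] //.
  by apply/negbTE; apply/eqP => -[e]; subst w; rewrite Hy in Hw.
exists D; split; last first.
- move=> x Hx; case: (boolP (x \in B)) => HxB; first by left; rewrite DB.
  by right; exact: Hinv.
- by rewrite EB.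
rewrite /= EB.
have rk_lt : forall u w, u \in B -> w \in B -> h w < h u -> rk w < rk u.
  move=> u w Hu Hw hwu; apply: proper_card; apply/properP; split.
    apply/subsetP => y; rewrite !inE => /andP[-> hy] /=; exact: ltn_trans hy hwu.
  by exists w; rewrite !inE ?Hw ?hwu ?ltnn.
split.
- move=> u Hu; rewrite DB //=; split=> //.
  + apply: leq_trans (max_card B); apply: proper_card; apply/properP; split.
      by apply/subsetP => y; rewrite inE => /andP[].
    by exists u; rewrite // inE ltnn andbF.
  + move=> w Hw; have Bw := Hp2 u w Hu Hw; rewrite DB //=; split=> //.
    exact: rk_lt (Hp3 u w Hu Hw).
  + by move=> w Hw; apply/idP/eqP => /(Hp1 u w Hu Hw).
- move=> v Hv; rewrite DB //=; have [Xs Xd _] := Hsub v Hv; split=> //.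
  apply: wf_ext (HDv v Hv).1 => x Hx; exact: DX.
- by move=> v w Hv Hw; rewrite !DB //=; exact: Hdisj.
- by move=> x Hx; case: (Hcov x Hx) => [|[v Hv Hx']]; [left | right; exists v; rewrite ?DB].
split.
- by move=> u w Hu Hw; rewrite !DB //=; exact: A1.
- by move=> u w y Hu Hw; rewrite !DB //=; exact: A2.
- by move=> u w y Hu Hw; rewrite !DB //=; exact: A3.
- by move=> v w x y Hv Hw; rewrite !DB //=; exact: A4.
- rewrite HSs; congr (_ |: _); apply/setP => S.
  apply/imset2P/imset2P => -[v R Hv HR ->]; exists v R => //; move: HR; by rewrite DB.
Qed.

End WF.

Section Props.
Variables (V : finType) (a : rel V) (D : V -> dat V).

Lemma wf_props k : forall X c Ss, wf a D k X c Ss -> forall x, x \in X ->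
  [/\ d_rk (D x) < #|V|, d_lvl (D x) < k, (d_own (D x) = c -> d_lvl (D x) = k.-1) &
      (d_own (D x) = c \/ exists y, [/\ d_own (D x) = Some y, y \in X & d_lvl (D x) < d_lvl (D y)])].
Proof.
elim: k => [|k IH] X c Ss /=; first by move=> [-> _] x; rewrite inE.
set B := [set x in X | _] => -[H1 H2 H3 H4 _] x Hx.
case: (boolP (x \in B)) => HxB.
  have [h1 h2 _ _] := H1 x HxB; move: HxB; rewrite inE => /andP[_ /eqP e].
  by split=> //; [rewrite h2 | left].
have [v Hv Hxv] : exists2 v, v \in B & x \in d_sub (D v) by case: (H4 x Hx) => // H; rewrite H in HxB.
have [Xs _ Wv] := H2 v Hv.
have [p1 p2 p3 p4] := IH _ _ _ Wv x Hxv.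
split=> //; first exact: ltnW p2.
  by move=> e; move: HxB; rewrite inE Hx e eqxx.
right; case: p4 => [e|[y [e Hy lt]]].
  exists v; split=> //; first by move: Hv; rewrite inE => /andP[].
  have [_ h2 _ _] := H1 v Hv; rewrite h2 (p3 e); lia.
by exists y; split=> //; exact: (subsetP Xs).
Qed.

End Props.

Section Tree2.
Variables (V : finType) (a : rel V) (D : V -> dat V).
Local Notation own x := (d_own (D x)).
Local Notation rk x := (d_rk (D x)).
Local Notation lvl x := (d_lvl (D x)).
Local Notation N := #|V|.

Definition WT : finType := (V + (option V * 'I_(#|V|).+2))%type.
Definition L (c : option V) (n : nat) : WT := inr (c, inord n).
Definition tpar (w : WT) : option WT :=
  match w with
  | inl x => Some (L (own x) (rk x).+1)
  | inr (c, i) => if (i : nat) == N.+1 then (if c is Some x then Some (inl x) else None)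
                  else Some (L c (i : nat).+1)
  end.
Definition tlst (w : WT) : WT :=
  match w with inl x => L (Some x) N.+1 | inr (c, i) => L c (i : nat).-1 end.
Definition troot : WT := L None N.+1.
Definition T0 := BTree troot tpar tlst (fun _ => set0).
Local Notation ch := (child T0).

Lemma ch_chain c i : 0 < i <= N.+1 -> ch (L c i) (L c i.-1).
Proof.
case: i => [|i] // /andP[_ iN]; rewrite /child /= inordK; last exact: (ltn_trans iN).
have -> : (i == N.+1) = false by apply/eqP; lia.
by [].
Qed.

Lemma ch_vert x : ch (L (own x) (rk x).+1) (inl x).
Proof. by rewrite /child /=. Qed.

Lemma ch_sub x : ch (inl x) (L (Some x) N.+1).
Proof. by rewrite /child /= inordK // eqxx. Qed.

Fixpoint chn c i m : seq WT := if m is m'.+1 then L c i.-1 :: chn c i.-1 m' else [::].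

Lemma chn_path c m : forall i, m <= i -> i <= N.+1 ->
  path ch (L c i) (chn c i m) /\ last (L c i) (chn c i m) = L c (i - m).
Proof.
elim: m => [|m IH] i Hm Hi /=; first by rewrite subn0.
case: i Hm Hi => [|i] //= Hm Hi.
have [P1 P2] : path ch (L c i) (chn c i m) /\ last (L c i) (chn c i m) = L c (i - m).
  by apply: IH => //; apply: ltnW.
have -> : ch (L c i.+1) (L c i) by apply: (ch_chain c (i := i.+1)); rewrite Hi.
by rewrite P1 P2 subSS.
Qed.

Lemma chn_inl c i m y : inl y \notin chn c i m.
Proof. by elim: m i => [|m IH] i //=; rewrite inE IH. Qed.


Lemma inl_eq (y w : V) : (inl y == inl w :> WT) = (y == w).
Proof. by apply/eqP/eqP => [[]|->]. Qed.

Lemma inl_L y c n : (inl y == L c n) = false.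
Proof. by []. Qed.

Hypothesis Grk : forall x, rk x < N.

Lemma down_path c i w t : own w = c -> rk w < i -> i <= N.+1 -> path ch (L (Some w) N.+1) t ->
  path ch (L c i) (chn c i (i - (rk w).+1) ++ inl w :: L (Some w) N.+1 :: t).
Proof.
move=> Ew Hr Hi Ht.
have [P1 P2] := chn_path c (leq_subr (rk w).+1 i) Hi.
rewrite cat_path P1 P2 subKn // /= -Ew ch_vert ch_sub Ht.
by [].
Qed.

Lemma down_mem c i m w t y :
  (inl y \in chn c i m ++ inl w :: L (Some w) N.+1 :: t) = (y == w) || (inl y \in t).
Proof. by rewrite mem_cat (negbTE (chn_inl _ _ _ _)) /= !in_cons inl_eq inl_L. Qed.

Lemma br_ind k : forall X c Ss, wf a D k X c Ss ->
 (forall R, R \in Ss -> R \subset X /\ exists t, path ch (L c N.+1) t /\ [set y | inl y \in L c N.+1 :: t] = R) /\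
 (forall u, u \in X -> exists s, [/\ is_branch T0 s, s = [::] \/ ohead s = Some (L (own u) (rk u))
      & forall y, (inl y \in s) = (y \in X) && a u y]).
Proof.
elim: k => [|k IH] X c Ss /=.
  move=> [-> ->]; split; last by move=> u; rewrite inE.
  move=> R; rewrite inE => /eqP ->; split; first exact: sub0set.
  by exists [::]; split=> //; apply/setP => y; rewrite !inE inl_L.
set B := [set x in X | _] => -[H1 H2 H3 H4 [A1 A2 A3 A4 HSs]].
have BX : forall x, x \in B -> x \in X /\ own x = c by move=> x; rewrite inE => /andP[-> /eqP].
have IHv := fun v Hv => IH _ _ _ (let: And3 _ _ W := H2 v Hv in W).
split.
  move=> R; rewrite HSs in_setU1 => /orP[/eqP ->|].
    split; first exact: sub0set.
    by exists [::]; split=> //; apply/setP => y; rewrite !inE inl_L.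
  move=> /imset2P[v R' Hv HR' ->].
  have [Rsub [t' [Pt' St']]] := (IHv v Hv).1 R' HR'.
  have [Xs _ _] := H2 v Hv; have [Xv Ev] := BX v Hv.
  split.
    apply/subsetP => y; rewrite in_setU1 => /orP[/eqP->|H] //.
    exact: (subsetP Xs) (subsetP Rsub y H).
  exists (chn c N.+1 (N.+1 - (rk v).+1) ++ inl v :: L (Some v) N.+1 :: t'); split.
    apply: down_path Ev _ (leqnn _) Pt'; exact: ltnW (Grk v).
  by apply/setP => y; rewrite -St' !inE inl_L down_mem /=.
move=> u Hu; case: (boolP (u \in B)) => HuB.
  have [rk_lt lvl_eq fpP aP] := H1 u HuB; have [_ Eu] := BX u HuB.
  case E: (d_fp (D u)) => [w|].
    have [Hw rkw] := fpP w E.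
    have Auw : a u w by rewrite aP // E eqxx.
    have HR := A1 u w HuB Hw Auw.
    have [Rsub [t' [Pt' St']]] := (IHv w Hw).1 (d_rs (D u)) HR.
    have [Xw Ew] := BX w Hw.
    exists (L c (rk u) :: chn c (rk u) (rk u - (rk w).+1) ++ inl w :: L (Some w) N.+1 :: t').
    split; [ | by right; rewrite Eu | ].
      apply: down_path Ew rkw _ Pt'; exact: leqW (ltnW (Grk u)).
    move=> y; rewrite in_cons inl_L down_mem /=.
    have -> : (inl y \in t') = (y \in d_rs (D u)).
      by rewrite -St' !inE inl_L.
    apply/idP/idP.
      move=> /orP[/eqP->|Hy]; first by rewrite Xw Auw.
      have Hyw := subsetP Rsub y Hy.
      have [Xs _ _] := H2 w Hw.
      by rewrite (subsetP Xs y Hyw) /=; apply/(A2 u w y HuB Hw Hyw).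
    move=> /andP[Hy Ay]; case: (H4 y Hy) => [HyB|[w' Hw' Hyw']].
      by move: Ay; rewrite aP // E => /eqP [->]; rewrite eqxx.
    by have [_ ->] := (A2 u w' y HuB Hw' Hyw').1 Ay; rewrite orbT.
  exists [::]; split=> //; first by left.
  move=> y; apply/esym/negbTE/negP => /andP[Hy Ay].
  case: (H4 y Hy) => [HyB|[w' Hw' Hyw']]; first by move: Ay; rewrite aP // E.
  have [Aw' _] := (A2 u w' y HuB Hw' Hyw').1 Ay.
  by move: Aw'; rewrite aP // E.
have [v Hv Huv] : exists2 v, v \in B & u \in d_sub (D v).
  by case: (H4 u Hu) => // H; rewrite H in HuB.
have [s [Bs Hs Ms]] := (IHv v Hv).2 u Huv.
have [Xs _ _] := H2 v Hv.
exists s; split=> // y; rewrite Ms; apply/idP/idP.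
  by move=> /andP[Hy ->]; rewrite (subsetP Xs y Hy).
move=> /andP[Hy Ay]; rewrite Ay andbT.
case: (H4 y Hy) => [HyB|[w' Hw' Hyw']].
  by move: (A3 y v u HyB Hv Huv); rewrite Ay.
case: (eqVneq w' v) => [<- //|ne].
have ne' : v <> w' by move=> e; rewrite e eqxx in ne.
by move: (A4 v w' u y Hv Hw' ne' Huv Hyw'); rewrite Ay.
Qed.

End Tree2.

Lemma arith a b p q M : a < b -> p < M -> a * M + p < b * M + q.
Proof. nia. Qed.

Section Final.
Variables (V : finType) (a : rel V) (D : V -> dat V) (k : nat).
Local Notation own x := (d_own (D x)).
Local Notation rk x := (d_rk (D x)).
Local Notation lvl x := (d_lvl (D x)).
Local Notation N := #|V|.
Local Notation WT := (WT V).
Local Notation L := (@L V).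
Local Notation ch := (child (T0 D)).
Local Notation tpar := (tpar D).
Hypothesis Grk : forall x, rk x < N.
Hypothesis Glvl : forall x, lvl x < k.
Hypothesis Gown : forall x y, own x = Some y -> lvl x < lvl y.

Definition Lv (w : WT) : nat :=
  match w with inl x => lvl x | inr (None, _) => k | inr (Some x, _) => lvl x end.
Definition pos (w : WT) : nat := match w with inl _ => 0 | inr (_, i) => N.+2 - i end.
Definition hh (w : WT) := (k - Lv w) * N.+3 + pos w.
Definition isl (w : WT) : bool := if w is inl _ then true else false.

Lemma Lv_le w : Lv w <= k.
Proof. case: w => [x|[[x|] i]] //=; exact: ltnW. Qed.

Lemma pos_lt w : pos w < N.+3.
Proof. case: w => [x|[c i]] //=; rewrite ltnS; exact: leq_subr. Qed.

Lemma par_Lv w x : tpar w = Some x -> Lv w + isl w <= Lv x.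
Proof.
case: w => [y|[c i]] /=.
  move=> [<-] /=; case E: (own y) => [z|] /=; rewrite addn1; [exact: Gown | exact: Glvl].
case: ifP => _; last by move=> [<-]; case: c => [z|] /=; rewrite addn0.
by case: c => [z|] // [<-] /=; rewrite addn0.
Qed.

Lemma sub_succ_lt n i : i < n -> n - i.+1 < n - i.
Proof. lia. Qed.

Lemma ord_succ (i : 'I_N.+2) : (i : nat) != N.+1 -> i.+1 < N.+2.
Proof. have := ltn_ord i; lia. Qed.

Lemma Hh_ok w x : tpar w = Some x -> hh x < hh w.
Proof.
move=> E; have P := par_Lv E; have Lx := Lv_le x; rewrite /hh.
case: w E P => [y|[c i]] /= E P.
  apply: arith; last exact: pos_lt.
  move: P; rewrite addn1 => P; have := Lv_le (inl y); rewrite /= => Hy.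
  clear -P Lx Hy; lia.
move: E; case: ifP => [/eqP Ei|Ei].
  case: c P => [z|] // P [<-] /=; rewrite /= addn0 in P.
  rewrite Ei subSnn /= addn0 addn1; exact: ltnSn.
move=> [<-] /=; rewrite addn0 in P.
rewrite inordK; last exact: ord_succ (negbT Ei).
case: c P => [z|] P /=; rewrite ltn_add2l; exact: sub_succ_lt (ltn_ord i).
Qed.

Lemma troot_par : tpar (troot V) = None.
Proof. by rewrite /= inordK // eqxx. Qed.

Lemma tlst_inr (w : WT) : exists c, exists i, tlst w = inr (c, i).
Proof. by case: w => [x|[c i]]; eexists; eexists. Qed.

Lemma codom_inl (w : WT) : (w \in codom inl) = isl w.
Proof.
case: w => [x|y] /=; first exact: codom_f.
by apply/negbTE/negP => /codomP [x].
Qed.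

Lemma card_cons (x : WT) t : #|[set z in x :: t | z \in codom inl]| <= isl x + #|[set z in t | z \in codom inl]|.
Proof.
case E: (isl x).
  rewrite add1n; apply: leq_trans (_ : #|x |: [set z in t | z \in codom inl]| <= _); last first.
    by rewrite cardsU1; case: (_ \notin _).
  apply: subset_leq_card; apply/subsetP => z; rewrite !inE => /andP[/orP[->|->] ->] //.
  by rewrite orbT.
rewrite add0n; apply: subset_leq_card; apply/subsetP => z; rewrite !inE => /andP[/orP[/eqP ez|Hz] Hc].
  by move: Hc; rewrite ez codom_inl E.
by rewrite Hz Hc.
Qed.

Lemma cnt_bound x t : path ch x t -> #|[set z in x :: t | z \in codom inl]| <= Lv x + isl x.
Proof.
elim: t x => [|y t IH] x /=.
  move=> _; apply: leq_trans (card_cons x [::]) _.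
  rewrite (_ : [set z in [::] | _] = set0); last by apply/setP => z; rewrite !inE.
  by rewrite cards0 addn0 leq_addl.
move=> /andP[/eqP Ey Hp]; apply: leq_trans (card_cons x (y :: t)) _.
have := IH y Hp; have := par_Lv Ey; lia.
Qed.

Lemma Lv_last x t : path ch x t -> Lv (last x t) <= Lv x.
Proof.
elim: t x => [|y t IH] x //= /andP[/eqP Ey Hp].
apply: leq_trans (IH y Hp) _; have := par_Lv Ey; lia.
Qed.

Lemma Lv_last_inl x y t w : path ch x (y :: t) -> last x (y :: t) = inl w -> lvl w < Lv x.
Proof.
elim: t x y => [|z t IH] x y /=.
  rewrite andbT => /eqP Ey Ew; subst y; have := par_Lv Ey; rewrite /= addn1; by [].
move=> /andP[/eqP Ey Hp] Ew; have := IH y z Hp Ew; have := par_Lv Ey; lia.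
Qed.

Variable br : V -> seq WT.
Hypothesis Hbr : forall u, [/\ is_branch (T0 D) (br u), br u = [::] \/ ohead (br u) = Some (L (own u) (rk u))
   & forall y, (inl y \in br u) = (y \in [set: V]) && a u y].
Hypothesis Gtop : forall x, own x = None -> lvl x = k.-1.

Definition cs (w : WT) : {set WT} := match w with inl x => [set z in br x] | inr _ => set0 end.
Definition TT := BTree (troot V) tpar (@tlst V) cs.

Lemma TT_bt : is_burling_tree TT.
Proof.
split; first split.
- exact: troot_par.
- case=> [x|[c i]] //= ne; case: ifP => // /eqP Ei; case: c ne => // ne.
  by case: ne; rewrite /troot /L; congr inr; congr pair; apply: val_inj; rewrite /= inordK.
- by exists hh => w x; exact: Hh_ok.
split.
- case=> [x|[c i]] /= [w Ew]; first by rewrite inordK // eqxx.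
  have Hi : 0 < i.
    case: w Ew => [y|[c' i']] /=.
      move=> [_ <-]; rewrite inordK //; exact: leqW (Grk y).
    case: ifP => [_|Ei]; first by case: c'.
    by move=> [_ <-]; rewrite inordK //; exact: ord_succ (negbT Ei).
  rewrite /L inordK; last exact: leq_ltn_trans (leq_pred i) (ltn_ord i).
  have -> : (i.-1 == N.+1) = false.
    apply/negbTE; rewrite neq_ltn; apply/orP; left.
    by rewrite prednK // -ltnS ltn_ord.
  by rewrite prednK //; congr (Some (inr (c, _))); apply: val_inj; rewrite /= inordK.
- case=> [x|[c i]] //= [|[p [_ Ep]]] //.
  by move: Ep; case: p => [y|[c' i']]; rewrite /= /L.
- case=> [x|[c i]] p /=.
    move=> [<-] ne; have [B1 B2 B3] := Hbr x; exists (br x); split=> //.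
    by move: B2; rewrite /= inordK //; exact: leqW (Grk x).
  by move=> _ _; exists [::]; split; [by [] | by left | apply/setP => z; rewrite !inE].
Qed.

Lemma TT_kb : k_burling TT a inl k.
Proof.
split; first split.
- by move=> x y [].
- by move=> u v /=; have [_ _ B3] := Hbr u; rewrite inE B3 in_setT.
case=> [|x t] /=.
  by move=> _; rewrite (_ : [set z | false] = set0 :> {set WT}) ?cards0 //; apply/setP => z; rewrite !inE.
move=> Hp; apply: leq_trans (cnt_bound Hp) _.
case: x {Hp} => [y|[[y|] i]] /=; rewrite ?addn0 ?addn1 //; exact: ltnW.
Qed.

Lemma TT_top v : own v = None <-> in_top TT inl v.
Proof.
have [[_ Hnon _] _] := TT_bt.
have Hreach : forall w, connect (child TT) (bt_root TT) w.
  by move=> w; apply: (reach_root (hh := hh)) => //; [exact: Hh_ok | exact: troot_par].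
split.
- move=> Ev t Hp El u Hu.
  have [t1 [t2 [Es Hp2 _]]] := path_split Hp Hu.
  have Elast : last (inl u) t2 = inl v.
    rewrite -El; transitivity (last (inl u) (bt_root TT :: t)) => //.
    by rewrite Es last_cat.
  case: t2 Hp2 Elast {Es} => [|y t2] Hp2 Elast; first by case: Elast.
  have := Lv_last_inl Hp2 Elast; rewrite /= (Gtop Ev) => H.
  have := Glvl u; clear -H; lia.
- move=> Ht; case E: (own v) => [x|] //; exfalso.
  have /connectP [t Hp El] := Hreach (inl v).
  have Cxv : connect (child TT) (inl x) (last (bt_root TT) t).
    rewrite -El; apply/connectP.
    exists (L (Some x) N.+1 :: chn (Some x) N.+1 (N.+1 - (rk v).+1) ++ [:: inl v]); last first.
      by rewrite /= last_cat.
    have [P1 P2] := chn_path D (Some x) (leq_subr (rk v).+1 N.+1) (leqnn _).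
    have Hpth : path (child (T0 D)) (inl x) (L (Some x) N.+1 :: chn (Some x) N.+1 (N.+1 - (rk v).+1) ++ [:: inl v]).
      rewrite /= ch_sub /= cat_path P1 P2 subKn /=; last exact: ltnW (Grk v).
      by rewrite andbT -E ch_vert.
    exact: Hpth.
  case: (path_anc Hp (mem_last _ _) Cxv) => H.
    have e := Ht t Hp (esym El) x H; subst x.
    by have := Gown E; rewrite ltnn.
  have := @conn_antisym _ TT hh Hh_ok _ _ H (Hreach _); by [].
Qed.

End Final.

Lemma dir2 (k : nat) (V : finType) (a : rel V) (S : {set V}) :
  (exists Ss : {set {set V}}, seqb a k [set: V] Ss S) ->
  (exists (W : finType) (T : btree W) (phi : V -> W),
      [/\ is_burling_tree T, k_burling T a phi k &
          forall v, v \in S <-> in_top T phi v]).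
Proof.
move=> [Ss HS].
have [D [HW ES _]] := ext HS (or_introl (erefl None)).
have P := fun x => wf_props HW (in_setT x).
have Grk : forall x, d_rk (D x) < #|V| by move=> x; have [] := P x.
have Glvl : forall x, d_lvl (D x) < k by move=> x; have [] := P x.
have Gtop : forall x, d_own (D x) = None -> d_lvl (D x) = k.-1 by move=> x; have [] := P x.
have Gown : forall x y, d_own (D x) = Some y -> d_lvl (D x) < d_lvl (D y).
  move=> x y E; have [_ _ _ [|[y' [E' _ lt]]]] := P x; first by rewrite E.
  by move: E'; rewrite E => -[->].
have [_ I2] := br_ind Grk HW.
have Hch : forall u, exists s, [/\ is_branch (T0 D) s, s = [::] \/ ohead s = Some (L (d_own (D u)) (d_rk (D u)))
   & forall y, (inl y \in s) = (y \in [set: V]) && a u y] := fun u => I2 u (in_setT u).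
have [br Hbr] := @functional_choice _ _ _ Hch.
exists (WT V), (TT D br), inl; split.
- exact: TT_bt.
- exact: TT_kb.
- move=> v; rewrite ES !inE; split.
    move=> /eqP E; exact: (proj1 (TT_top Grk Glvl Gown Hbr Gtop v) E).
  by move=> H; apply/eqP; exact: (proj2 (TT_top Grk Glvl Gown Hbr Gtop v) H).
Qed.

Unset Implicit Arguments.

Theorem lemma4p4 (k : nat) (V : finType) (a : rel V) (S : {set V}) :
  oriented a ->
  (exists (W : finType) (T : btree W) (phi : V -> W),
      [/\ is_burling_tree T, k_burling T a phi k &
          forall v, v \in S <-> in_top T phi v])
  <->
  (exists Ss : {set {set V}}, seqb a k [set: V] Ss S).
Proof.
move=> _; split; [exact: dir1 | exact: dir2].
Qed.
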